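(* Let $\mathcal{T}=\langle\Sigma^*\times\mathcal{M},Q,I,F,\Delta\rangle$ be a monoidal finite-state transducer with output monoid $\mathcal{M}=\langle M,\circ,e\rangle$. Then: (1) the monoidal automaton $\mathcal{A}^2_e=\langle\mathcal{M}\times\mathcal{M},Q\times Q,I\times I,F\times F,\Delta^e_2\rangle$, where $\Delta^e_2=\{\langle\langle p_1,p_2\rangle,\langle m_1,m_2\rangle,\langle q_1,q_2\rangle\rangle:\exists a\in\Sigma\cup\{\varepsilon\}\ \langle p_i,\langle a,m_i\rangle,q_i\rangle\in\Delta^{ext}\text{ for }i=1,2\}$, is a squared output automaton for $\mathcal{T}$; (2) the monoidal automaton $\mathcal{A}^2=\langle\mathcal{M}\times\mathcal{M},Q\times Q,I\times I,F\times F,\Delta_2\rangle$, where $\Delta_2=\{\langle\langle p_1,p_2\rangle,\langle m_1,m_2\rangle,\langle q_1,q_2\rangle\rangle:\exists a\in\Sigma\ \langle p_i,\langle a,m_i\rangle,q_i\rangle\in\Delta\text{ for }i=1,2\}\cup\{\langle\langle p_1,p_2\rangle,\langle e,m_2\rangle,\langle p_1,q_2\rangle\rangle:\langle p_2,\langle\varepsilon,m_2\rangle,q_2\rangle\in\Delta\}\cup\{\langle\langle p_1,p_2\rangle,\langle m_1,e\rangle,\langle q_1,p_2\rangle\rangle:\langle p_1,\langle\varepsilon,m_1\rangle,q_1\rangle\in\Delta\}$, is a squared output automaton for $\mathcal{T}$.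
   Context: The transducer has finite $\Delta\subseteq Q\times((\Sigma\cup\{\varepsilon\})\times M)\times Q$. $\Delta^{ext}=\Delta\cup\{\langle q,\langle\varepsilon,e\rangle,q\rangle:q\in Q\}$. For a monoidal automaton with transitions $\Delta$, the generalized transition relation $\Delta^*$ is the least set containing $\langle q,\text{unit},q\rangle$ for every state $q$ and closed under: $\langle q_1,w,q_2\rangle\in\Delta^*$, $\langle q_2,a,q_3\rangle\in\Delta$ imply $\langle q_1,w\circ a,q_3\rangle\in\Delta^*$ (products in $\mathcal{M}\times\mathcal{M}$ and $\Sigma^*\times\mathcal{M}$ are componentwise). A monoidal automaton $\langle\mathcal{M}\times\mathcal{M},Q\times Q,I\times I,F\times F,\Delta_2\rangle$ with finite $\Delta_2$ is a squared output automaton for $\mathcal{T}$ if for all $p_1,p_2,q_1,q_2\in Q$, $m,n\in M$: $\langle\langle p_1,p_2\rangle,\langle m,n\rangle,\langle q_1,q_2\rangle\rangle\in\Delta_2^*$ iff there is $u\in\Sigma^*$ with $\langle p_1,\langle u,m\rangle,q_1\rangle\in\Delta^*$ and $\langle p_2,\langle u,n\rangle,q_2\rangle\in\Delta^*$. *)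

(* Defs.v *)
From mathcomp Require Import all_boot.
From Stdlib Require List.
Set Implicit Arguments.
Unset Strict Implicit.
Unset Printing Implicit Defensive.

Definition fin_trans (S L : Type) (D : S -> L -> S -> Prop) : Prop :=
  exists s : list (S * L * S), forall p l q, D p l q <-> List.In (p, l, q) s.

Inductive gstar (S L : Type) (op : L -> L -> L) (u : L)
    (D : S -> L -> S -> Prop) : S -> L -> S -> Prop :=
| gstar_refl q : gstar op u D q u q
| gstar_step q1 w q2 a q3 :
    gstar op u D q1 w q2 -> D q2 a q3 -> gstar op u D q1 (op w a) q3.

Definition pair_op (A B : Type) (opA : A -> A -> A) (opB : B -> B -> B)
  (x y : A * B) : A * B := (opA x.1 y.1, opB x.2 y.2).

(* The word in Σ* denoted by a ∈ Σ ∪ {ε} (None = ε). *)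
Definition opt_word (Sigma : Type) (a : option Sigma) : seq Sigma :=
  if a is Some x then [:: x] else [::].

(* A transducer transition ⟨p,⟨a,m⟩,q⟩, a ∈ Σ ∪ {ε}, viewed as a transition
   of the monoidal automaton over Σ* × M. *)
Definition trans_lift (Sigma Q M : Type) (Delta : Q -> option Sigma * M -> Q -> Prop)
  (p : Q) (l : seq Sigma * M) (q : Q) : Prop :=
  exists a, Delta p (a, l.2) q /\ l.1 = opt_word a.

Definition tstar (Sigma Q M : Type) (op : M -> M -> M) (e : M)
  (Delta : Q -> option Sigma * M -> Q -> Prop) : Q -> seq Sigma * M -> Q -> Prop :=
  gstar (pair_op (@cat Sigma) op) ([::], e) (trans_lift Delta).

Definition Delta_ext (Sigma Q M : Type) (e : M)
  (Delta : Q -> option Sigma * M -> Q -> Prop) (p : Q) (l : option Sigma * M) (q : Q)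
  : Prop := Delta p l q \/ (l = (None, e) /\ p = q).

Definition Delta2e (Sigma Q M : Type) (e : M)
  (Delta : Q -> option Sigma * M -> Q -> Prop)
  (p : Q * Q) (m : M * M) (q : Q * Q) : Prop :=
  exists a : option Sigma,
    Delta_ext e Delta p.1 (a, m.1) q.1 /\ Delta_ext e Delta p.2 (a, m.2) q.2.

Definition Delta2 (Sigma Q M : Type) (e : M)
  (Delta : Q -> option Sigma * M -> Q -> Prop)
  (p : Q * Q) (m : M * M) (q : Q * Q) : Prop :=
  (exists a : Sigma, Delta p.1 (Some a, m.1) q.1 /\ Delta p.2 (Some a, m.2) q.2)
  \/ (m.1 = e /\ q.1 = p.1 /\ Delta p.2 (None, m.2) q.2)
  \/ (m.2 = e /\ q.2 = p.2 /\ Delta p.1 (None, m.1) q.1).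

(* ⟨M×M, Q×Q, I×I, F×F, D2⟩ is a squared output automaton for the transducer
   with transitions Delta (I, F play no role in the definition). *)
Definition squared_output (Sigma Q M : Type) (op : M -> M -> M) (e : M)
  (Delta : Q -> option Sigma * M -> Q -> Prop)
  (D2 : Q * Q -> M * M -> Q * Q -> Prop) : Prop :=
  fin_trans D2 /\
  forall (p1 p2 q1 q2 : Q) (m n : M),
    gstar (pair_op op op) (e, e) D2 (p1, p2) (m, n) (q1, q2) <->
    exists u : seq Sigma,
      tstar op e Delta p1 (u, m) q1 /\ tstar op e Delta p2 (u, n) q2.

(* Main.v *)
Require Import Defs.
From mathcomp Require Import all_boot.
From Stdlib Require List Classical ClassicalEpsilon.
Local Open Scope seq_scope.

Section S.
Variables (Sigma Q : finType) (M : Type) (op : M -> M -> M) (e : M).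
Hypotheses (opA : forall x y z, op x (op y z) = op (op x y) z)
  (op1m : forall x, op e x = x) (opm1 : forall x, op x e = x).
Variable Delta : Q -> option Sigma * M -> Q -> Prop.

Let T := tstar op e Delta.

Lemma ext_step p0 u x p a m q :
  T p0 (u, x) p -> Delta_ext e Delta p (a, m) q ->
  T p0 (u ++ opt_word a, op x m) q.
Proof.
move=> H [Hd | [[-> ->] <-]].
  have Hl : trans_lift Delta p (opt_word a, m) q by exists a.
  exact: (gstar_step H Hl).
by rewrite /= cats0 opm1.
Qed.

Lemma fwd (D2 : Q * Q -> M * M -> Q * Q -> Prop)
  (HD : forall p1 p2 m1 m2 q1 q2, D2 (p1, p2) (m1, m2) (q1, q2) ->
     exists a, Delta_ext e Delta p1 (a, m1) q1 /\ Delta_ext e Delta p2 (a, m2) q2)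
  P x R : gstar (pair_op op op) (e, e) D2 P x R ->
  exists u, T P.1 (u, x.1) R.1 /\ T P.2 (u, x.2) R.2.
Proof.
elim => [q | q1 w q2 a q3 _ [u [H1 H2]] H].
  by exists [::]; split; apply: gstar_refl.
move: q2 a q3 H H1 H2 => [r1 r2] [a1 a2] [s1 s2] H H1 H2.
have [b [E1 E2]] := HD _ _ _ _ _ _ H.
exists (u ++ opt_word b); split.
- by apply: ext_step; [exact: H1 | exact: E1].
- by apply: ext_step; [exact: H2 | exact: E2].
Qed.

Lemma bwd (D2 : Q * Q -> M * M -> Q * Q -> Prop)
  (H1 : forall p1 p2 a m1 m2 q1 q2, Delta p1 (Some a, m1) q1 ->
      Delta p2 (Some a, m2) q2 -> D2 (p1, p2) (m1, m2) (q1, q2))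
  (H2 : forall p1 p2 m q2, Delta p2 (None, m) q2 -> D2 (p1, p2) (e, m) (p1, q2))
  (H3 : forall p1 p2 m q1, Delta p1 (None, m) q1 -> D2 (p1, p2) (m, e) (q1, p2)) :
  forall p1 x q1, T p1 x q1 -> forall p2 y q2, T p2 y q2 -> x.1 = y.1 ->
  gstar (pair_op op op) (e, e) D2 (p1, p2) (x.2, y.2) (q1, q2).
Proof.
move=> p1 x q1; elim => [r | r w s l t r1 IH1 tl].
  move=> p2 y q2; elim => [r' | r' w' s' l' t' r2 IH2 tl'] /= Hu.
    exact: gstar_refl.
  case: tl' => [[b|] [Ht El]]; rewrite El in Hu.
    by move: Hu; case: (w'.1).
  rewrite cats0 in Hu.
  have := gstar_step (IH2 Hu) (H2 r _ _ _ Ht).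
  by rewrite /pair_op /= op1m.
move=> p2 y q2 run2 Hu.
case: tl => [[a|] [Ht El]]; last first.
  rewrite /= El cats0 in Hu.
  have := gstar_step (IH1 _ _ _ run2 Hu) (H3 _ q2 _ _ Ht).
  by rewrite /pair_op /= opm1.
rewrite /= El in Hu.
elim: run2 Hu => [r' | r' w' s' l' t' r2 IH2 tl'] /= Hu.
  by move: Hu; case: (w.1).
case: tl' => [[b|] [Ht' El']]; rewrite El' in Hu.
  move: Hu; rewrite !cats1 => /rcons_inj [Hw Hab]; subst b.
  exact: (gstar_step (IH1 _ _ _ r2 Hw) (H1 _ _ _ _ _ _ _ Ht Ht')).
rewrite cats0 in Hu.
have := gstar_step (IH2 Hu) (H2 t _ _ _ Ht').
by rewrite /pair_op /= opm1.
Qed.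

Lemma in_enum (U : finType) (x : U) : List.In x (enum U).
Proof.
have : x \in enum U by rewrite mem_enum.
elim: (enum U) => //= y s IH; rewrite in_cons => /orP [/eqP ->|/IH]; auto.
Qed.

Lemma fin_gen (D2 : Q * Q -> M * M -> Q * Q -> Prop) (Ms : list M)
  (HM : forall p m1 m2 q, D2 p (m1, m2) q -> List.In m1 Ms /\ List.In m2 Ms) :
  fin_trans D2.
Proof.
pose PQ := List.list_prod (enum Q) (enum Q).
pose L := List.list_prod (List.list_prod PQ (List.list_prod Ms Ms)) PQ.
exists (List.filter (fun t => if ClassicalEpsilon.excluded_middle_informative (D2 t.1.1 t.1.2 t.2)
                             then true else false) L).
move=> [p1 p2] [m1 m2] [q1 q2]; rewrite List.filter_In /=; split.
  move=> H; have [A B] := HM _ _ _ _ H; split.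
    rewrite !List.in_prod_iff; do !split => //; exact: in_enum.
  by case: ClassicalEpsilon.excluded_middle_informative.
by case=> _; case: ClassicalEpsilon.excluded_middle_informative.
Qed.

End S.

Theorem proposition6 (Sigma Q : finType) (M : Type) (op : M -> M -> M) (e : M)
  (opA : forall x y z, op x (op y z) = op (op x y) z)
  (op1m : forall x, op e x = x) (opm1 : forall x, op x e = x)
  (I F : {set Q})
  (Delta : Q -> option Sigma * M -> Q -> Prop)
  (Delta_fin : fin_trans Delta) :
  squared_output op e Delta (Delta2e e Delta) /\
  squared_output op e Delta (Delta2 e Delta).
Proof.
have [s Hs] := Delta_fin.
pose Ms := e :: List.map (fun t => t.1.2.2) s.
have inD : forall p a m q, Delta p (a, m) q -> List.In m Ms.
  move=> p a m q /Hs H; right; exact: (List.in_map (fun t => t.1.2.2) _ _ H).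
have inE : forall p a m q, Delta_ext e Delta p (a, m) q -> List.In m Ms.
  move=> p a m q [H|[[_ ->] _]]; [exact: inD H | by left].
split; split.
- apply: (@fin_gen Q M (Delta2e e Delta) Ms) => [[p1 p2] m1 m2 [q1 q2] [a [A B]]].
  split; [exact: inE A | exact: inE B].
- move=> p1 p2 q1 q2 m n; split.
    move=> Hg; apply: (@fwd Sigma Q M op e opm1 Delta (Delta2e e Delta) _ _ _ _ Hg).
    by move=> ? ? ? ? ? ? [a [A B]]; exists a.
  case=> u [A B].
  apply: (@bwd Sigma Q M op e op1m opm1 Delta (Delta2e e Delta) _ _ _ _ _ _ A _ _ _ B erefl).
  + by move=> ? ? a ? ? ? ? X Y; exists (Some a); split; left.
  + by move=> ? ? ? ? X; exists None; split; [right | left].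
  + by move=> ? ? ? ? X; exists None; split; [left | right].
- apply: (@fin_gen Q M (Delta2 e Delta) Ms) => [[p1 p2] m1 m2 [q1 q2]] /=.
  rewrite /Delta2 /=; case=> [[a [A B]] | [[-> [_ B]] | [-> [_ A]]]].
  + split; [exact: inD A | exact: inD B].
  + split; [by left | exact: inD B].
  + split; [exact: inD A | by left].
- move=> p1 p2 q1 q2 m n; split.
    move=> Hg; apply: (@fwd Sigma Q M op e opm1 Delta (Delta2 e Delta) _ _ _ _ Hg).
    move=> p1' p2' m1 m2 q1' q2' /=.
    rewrite /Delta2 /=; case=> [[a [A B]] | [[-> [-> B]] | [-> [-> A]]]].
    + by exists (Some a); split; left.
    + by exists None; split; [right | left].
    + by exists None; split; [left | right].
  case=> u [A B].
  apply: (@bwd Sigma Q M op e op1m opm1 Delta (Delta2 e Delta) _ _ _ _ _ _ A _ _ _ B erefl).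
  + by move=> ? ? a ? ? ? ? X Y; left; exists a.
  + by move=> ? ? ? ? X; right; left.
  + by move=> ? ? ? ? X; right; right.
Qed.
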